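(* Let $\mathbf{X}$ be a set of discrete random variables with sample space $\Omega(\mathbf{X})$, and let $O$ be a positive unital circuit over $\mathbf{X}$. Then the family $\{O(\mathbf{x})\}_{\mathbf{x}\in\Omega(\mathbf{X})}$ is a positive operator-valued measure, i.e. each $O(\mathbf{x})$ is positive semi-definite and $\sum_{\mathbf{x}\in\Omega(\mathbf{X})}O(\mathbf{x})=\mathbb{1}$.
   Context: A positive operator-valued measure (POVM) is a finite family of PSD complex matrices summing to the identity matrix. A quantum operation from $d\times d$ to $d'\times d'$ complex matrices is a map $\Phi(A)=\sum_{j}K_jAK_j^*$ with $d'\times d$ matrices $K_j$ satisfying $\sum_j K_j^*K_j\le\mathbb{1}$ (Loewner order); it is unital if $\Phi(\mathbb{1}_d)=\mathbb{1}_{d'}$. A partition circuit over $\mathbf{X}=\{X_0,\dots,X_{N-1}\}$ is a rooted binary tree whose leaves are in bijection with the variables (leaf $k$ carries variable $X_k$ with finite sample space $\Omega(X_k)$); each internal unit $k$ has two children $k_l,k_r$; $\mathbf{x}_k$ denotes an assignment to the variables at the leaves below $k$. A positive operator circuit assigns to each leaf $k$ PSD matrices $E_{x_k}$, $x_k\in\Omega(X_k)$, and to each internal unit $k$ a quantum operation $\Phi_k$, and computes $O_k(\mathbf{x}_k)=E_{x_k}$ at leaves and $O_k(\mathbf{x}_k)=\Phi_k(O_{k_l}(\mathbf{x}_{k_l})\otimes O_{k_r}(\mathbf{x}_{k_r}))$ at internal units ($\otimes$ the Kronecker product); $O(\mathbf{x})=O_{\mathrm{root}}(\mathbf{x})$.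 It is a positive unital circuit if every $\Phi_k$ is unital (i.e. $\Phi_k(\mathbb{1}_{k_l}\otimes\mathbb{1}_{k_r})=\mathbb{1}_k$ with identity matrices of the appropriate sizes) and for every leaf $k$ the family $\{E_{x_k}\}_{x_k\in\Omega(X_k)}$ is a POVM. *)

(* Defs.v *)
(* Complex scalars: an arbitrary numClosedFieldType C
   (e.g. algC, or complex R for R : rcfType); Kronecker product from
   mathcomp-real-closed's mxtens. *)
From HB Require Import structures.
From mathcomp Require Import all_boot all_order all_algebra.
From mathcomp Require Export mxtens.
Set Implicit Arguments.
Unset Strict Implicit.
Unset Printing Implicit Defensive.
Import Order.TTheory GRing.Theory Num.Theory.
Local Open Scope ring_scope.

Section Circuits.
Variable C : numClosedFieldType.

Definition adjmx m n (A : 'M[C]_(m, n)) : 'M[C]_(n, m) := (map_mx Num.conj A)^T.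

Definition psdmx n (A : 'M[C]_n) : Prop :=
  adjmx A = A /\ forall v : 'cV[C]_n, 0 <= (adjmx v *m A *m v) 0 0.

Definition loewner_le n (A B : 'M[C]_n) : Prop := psdmx (B - A).

Definition POVM (I : finType) n (E : I -> 'M[C]_n) : Prop :=
  (forall i, psdmx (E i)) /\ \sum_(i : I) E i = 1%:M.

Definition kraus_apply d d' (Ks : seq 'M[C]_(d', d)) (A : 'M[C]_d) : 'M[C]_d' :=
  \sum_(K <- Ks) (K *m A *m adjmx K).

Definition is_quantum_operation d d' (Ks : seq 'M[C]_(d', d)) : Prop :=
  loewner_le (\sum_(K <- Ks) (adjmx K *m K)) 1%:M.

Definition is_unital d d' (Ks : seq 'M[C]_(d', d)) : Prop :=
  kraus_apply Ks 1%:M = 1%:M.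

Variable N : nat.
(* variables X_0 .. X_{N-1} with finite sample spaces Omega k *)
Variable Omega : 'I_N -> finType.

(* positive operator circuit whose root unit has dimension d: a binary
   tree; leaves carry a variable index k and matrices E_{x_k}, internal
   units carry Kraus operators of a quantum operation from
   (dl*dr) x (dl*dr) matrices to d x d matrices. *)
Inductive circuit : nat -> Type :=
| CLeaf (d : nat) (k : 'I_N) (E : Omega k -> 'M[C]_d) : circuit d
| CNode (d dl dr : nat) (Ks : seq 'M[C]_(d, dl * dr))
        (l : circuit dl) (r : circuit dr) : circuit d.

Fixpoint leaves d (c : circuit d) : seq 'I_N :=
  match c with
  | CLeaf _ k _ => [:: k]
  | CNode _ _ _ _ l r => leaves l ++ leaves r
  end.

Definition partition_circuit d (c : circuit d) : Prop :=
  perm_eq (leaves c) (enum 'I_N).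

Definition assignment := {dffun forall k : 'I_N, Omega k}.

Fixpoint eval d (c : circuit d) (x : assignment) : 'M[C]_d :=
  match c with
  | CLeaf _ k E => E (x k)
  | CNode _ _ _ Ks l r => kraus_apply Ks (eval l x *t eval r x)
  end.

Fixpoint positive_unital d (c : circuit d) : Prop :=
  match c with
  | CLeaf _ k E => POVM E
  | CNode _ _ _ Ks l r =>
      [/\ is_quantum_operation Ks, is_unital Ks,
          positive_unital l & positive_unital r]
  end.

End Circuits.

(* Main.v *)
Require Import Defs.
From HB Require Import structures.
From mathcomp Require Import all_boot all_order all_algebra.
From mathcomp Require Import spectral sesquilinear.
Import Order.TTheory GRing.Theory Num.Theory.
Local Open Scope ring_scope.
Set Implicit Arguments.
Unset Strict Implicit.
Unset Printing Implicit Defensive.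
Section Mx.
Variable C : numClosedFieldType.

Lemma adjE m n (A : 'M[C]_(m, n)) : adjmx A = map_mx Num.conj A^T.
Proof. by rewrite /adjmx map_trmx. Qed.

Lemma adjmxK m n (A : 'M[C]_(m, n)) : adjmx (adjmx A) = A.
Proof. by apply/matrixP => i j; rewrite !mxE conjCK. Qed.

Lemma adjmx_mul m n p (A : 'M[C]_(m, n)) (B : 'M[C]_(n, p)) :
  adjmx (A *m B) = adjmx B *m adjmx A.
Proof. by rewrite /adjmx map_mxM trmx_mul. Qed.

Lemma adjmxD m n (A B : 'M[C]_(m, n)) : adjmx (A + B) = adjmx A + adjmx B.
Proof. by rewrite /adjmx map_mxD linearD. Qed.

Lemma adjmx0 m n : adjmx (0 : 'M[C]_(m, n)) = 0.
Proof. by rewrite /adjmx map_mx0 trmx0. Qed.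

Lemma adjmx_sum m n (s : seq 'M[C]_(m, n)) (F : 'M[C]_(m, n) -> 'M[C]_(m, n)) :
  adjmx (\sum_(K <- s) F K) = \sum_(K <- s) adjmx (F K).
Proof. by apply: (big_morph _ (@adjmxD m n) (@adjmx0 m n)). Qed.

Lemma adjmx_tens m n p q (A : 'M[C]_(m, n)) (B : 'M[C]_(p, q)) :
  adjmx (A *t B) = adjmx A *t adjmx B.
Proof. by rewrite /adjmx map_mxT trmx_tens. Qed.

Lemma quad_sq n m (R : 'M[C]_(m, n)) (v : 'cV[C]_n) :
  0 <= (adjmx v *m (adjmx R *m R) *m v) 0 0.
Proof.
rewrite mulmxA -mulmxA -adjmx_mul mxE.
apply: sumr_ge0 => i _; rewrite !mxE mulrC; exact: mul_conjC_ge0.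
Qed.

Lemma psd_sq n m (R : 'M[C]_(m, n)) : psdmx (adjmx R *m R).
Proof. by split; [rewrite adjmx_mul adjmxK | exact: quad_sq]. Qed.

Lemma psd_decomp n (A : 'M[C]_n) : psdmx A -> exists R : 'M[C]_n, A = adjmx R *m R.
Proof.
move=> [Ah Apos].
have An : A \is normalmx.
  by apply/normalmxP; rewrite -adjE Ah.
have /orthomx_spectralP AE := An.
set P := spectralmx A in AE; set s := spectral_diag A in AE.
have Pu : P \is unitarymx by apply: spectral_unitarymx.
have Pi : invmx P = adjmx P by rewrite invmx_unitary // adjE.
have PP : P *m adjmx P = 1%:M by rewrite adjE; apply/unitarymxP.
have D : P *m A *m adjmx P = diag_mx s.
  by rewrite AE Pi !mulmxA PP mul1mx -mulmxA PP mulmx1.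
have s0 : forall i, 0 <= s 0 i.
  move=> i; have := Apos (adjmx (row i P)).
  rewrite adjmxK -row_mul (_ : adjmx (row i P) = col i (adjmx P)); last first.
    by apply/matrixP => a b; rewrite !mxE.
  have -> : (row i (P *m A) *m col i (adjmx P)) 0 0 = (P *m A *m adjmx P) i i.
    by rewrite !mxE; apply: eq_bigr => k _; rewrite !mxE.
  by rewrite D mxE eqxx mulr1n.
exists (diag_mx (map_mx sqrtC s) *m P).
have E : adjmx (diag_mx (map_mx sqrtC s)) *m diag_mx (map_mx sqrtC s) = diag_mx s.
  apply/matrixP => i j; rewrite !mxE (bigD1 i) //= big1 ?addr0; last first.
    by move=> k /negbTE kn; rewrite !mxE kn mulr0n Num.Theory.conjC0 mul0r.
  rewrite !mxE eqxx mulr1n mulrnAr geC0_conj ?sqrtC_ge0 // -expr2 sqrtCK //.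
by rewrite adjmx_mul !mulmxA -(mulmxA (adjmx P)) E AE Pi.
Qed.

Lemma psd_tens m n (A : 'M[C]_m) (B : 'M[C]_n) : psdmx A -> psdmx B -> psdmx (A *t B).
Proof.
move=> /psd_decomp [R ->] /psd_decomp [S ->].
rewrite -tensmx_mul -adjmx_tens; exact: psd_sq.
Qed.


Lemma psd_add n (A B : 'M[C]_n) : psdmx A -> psdmx B -> psdmx (A + B).
Proof.
move=> [Ah Ap] [Bh Bp]; split; first by rewrite adjmxD Ah Bh.
by move=> v; rewrite mulmxDr mulmxDl mxE addr_ge0.
Qed.

Lemma psd0 n : psdmx (0 : 'M[C]_n).
Proof. by split; [rewrite adjmx0 | move=> v; rewrite mulmx0 mul0mx mxE]. Qed.

Lemma psd_kraus d d' (Ks : seq 'M[C]_(d', d)) A : psdmx A -> psdmx (kraus_apply Ks A).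
Proof.
move=> /psd_decomp [R ->]; rewrite /kraus_apply.
apply: (big_ind (fun M => psdmx M)); [exact: psd0 | exact: psd_add |].
move=> K _; have := psd_sq (R *m adjmx K).
by rewrite adjmx_mul adjmxK !mulmxA.
Qed.

Lemma tens11 m n : (1%:M : 'M[C]_m) *t (1%:M : 'M[C]_n) = 1%:M.
Proof.
apply/matrixP=> i j.
case: (mxtens_indexP i)=> i0 i1; case: (mxtens_indexP j)=> j0 j1.
rewrite tensmxE !mxE (inj_eq (can_inj (@mxtens_indexK m n))) xpair_eqE.
by case: (i0 == j0); case: (i1 == j1); rewrite ?mulr1n ?mulr0n ?mulr1 ?mulr0.
Qed.

Lemma tens_suml m n p q (I : finType) (P : pred I) (F : I -> 'M[C]_(m, n)) (B : 'M[C]_(p, q)) :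
  (\sum_(i | P i) F i) *t B = \sum_(i | P i) (F i *t B).
Proof.
apply/matrixP=> a b; rewrite summxE !mxE summxE mulr_suml.
by apply: eq_bigr => i _; rewrite !mxE.
Qed.

Lemma tens_sumr m n p q (I : finType) (P : pred I) (A : 'M[C]_(m, n)) (F : I -> 'M[C]_(p, q)) :
  A *t (\sum_(i | P i) F i) = \sum_(i | P i) (A *t F i).
Proof.
apply/matrixP=> a b; rewrite summxE !mxE summxE mulr_sumr.
by apply: eq_bigr => i _; rewrite !mxE.
Qed.

Lemma kraus_sum d d' (Ks : seq 'M[C]_(d', d)) (I : finType) (P : pred I) (F : I -> 'M[C]_d) :
  \sum_(i | P i) kraus_apply Ks (F i) = kraus_apply Ks (\sum_(i | P i) F i).
Proof.
rewrite /kraus_apply exchange_big /=; apply: eq_bigr => K _.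
by rewrite mulmx_sumr mulmx_suml.
Qed.

End Mx.
Section Circ.
Variable C : numClosedFieldType.
Variable N : nat.
Variable Omega : 'I_N -> finType.
Local Notation asg := (assignment Omega).

Definition agree (s : seq 'I_N) (x y : asg) : bool :=
  [forall k, (k \notin s) ==> (x k == y k)].

Lemma agreeP s (x y : asg) : reflect (forall k, k \notin s -> x k = y k) (agree s x y).
Proof.
apply: (iffP forallP) => H k.
  by move=> ks; have /implyP/(_ ks)/eqP := H k.
by apply/implyP => ks; apply/eqP; apply: H.
Qed.

Definition merge (s : seq 'I_N) (a b : asg) : asg :=
  [ffun k => if k \in s then a k else b k].

Definition dep d (s : seq 'I_N) (f : asg -> 'M[C]_d) :=
  forall y y' : asg, (forall k, k \in s -> y k = y' k) -> f y = f y'.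

Lemma eval_dep d (c : circuit C Omega d) : dep (leaves c) (eval c).
Proof.
elim: c => [d0 k E | d0 dl dr Ks l IHl r IHr] y y' H /=.
  by rewrite H // mem_head.
rewrite (IHl y y') ?(IHr y y') // => k kin; apply: H; rewrite mem_cat kin ?orbT //.
Qed.

Lemma sum_tens dl dr (sl sr : seq 'I_N) (g : asg -> 'M[C]_dl) (h : asg -> 'M[C]_dr) x :
  dep sl g -> dep sr h -> (forall k, k \in sl -> k \notin sr) ->
  \sum_(y | agree (sl ++ sr) x y) (g y *t h y) =
  (\sum_(y | agree sl x y) g y) *t (\sum_(y | agree sr x y) h y).
Proof.
move=> dg dh dis.
rewrite tens_suml.
under [RHS]eq_bigr => i _ do rewrite tens_sumr.
rewrite pair_big_dep /=.
rewrite (reindex_onto (fun p : asg * asg => merge sl p.1 p.2)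
                      (fun y => (merge sl y x, merge sr y x))) /=; last first.
  move=> y /agreeP Ay; apply/ffunP => k; rewrite !ffunE.
  case: ifP => ksl; first by rewrite ksl.
  by case: ifP => // ksr; rewrite Ay // mem_cat ksl ksr.
apply: eq_big => [[y1 y2]|[y1 y2] _] /=; last first.
  congr (_ *t _).
    by apply: dg => k ks; rewrite ffunE ks.
  apply: dh => k ks; have ksl : k \notin sl by apply/negP => /dis; rewrite ks.
  by rewrite ffunE (negbTE ksl).
apply/idP/idP.
  move=> /andP[_ /eqP [<- <-]]; apply/andP; split; apply/agreeP => k kn;
    by rewrite ffunE (negbTE kn).
move=> /andP[/agreeP A1 /agreeP A2].
have E1 : merge sl (merge sl y1 y2) x = y1.
  by apply/ffunP => k; rewrite !ffunE; case: ifP => ksl; [rewrite ksl | rewrite A1 // ksl].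
have E2 : merge sr (merge sl y1 y2) x = y2.
  apply/ffunP => k; rewrite !ffunE; case: ifP => ksr.
    by case: ifP => // ksl; have := dis k ksl; rewrite ksr.
  by rewrite A2 // ksr.
rewrite E1 E2 eqxx andbT; apply/agreeP => k; rewrite mem_cat negb_or => /andP[k1 k2].
by rewrite ffunE (negbTE k1) A2.
Qed.


Definition upd (x : asg) k (a : Omega k) : asg :=
  finfun (fun j => match k =P j with ReflectT e => eq_rect k Omega a j e | ReflectF _ => x j end).

Arguments upd x k a : clear implicits.

Lemma upd_same x k a : upd x k a k = a.
Proof. by rewrite ffunE; case: eqP => // e; rewrite eq_axiomK. Qed.

Lemma upd_other x k a j : k != j -> upd x k a j = x j.
Proof. by rewrite ffunE; case: eqP. Qed.

Lemma sum_leaf d k (E : Omega k -> 'M[C]_d) x :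
  \sum_(y | agree [:: k] x y) E (y k) = \sum_(a : Omega k) E a.
Proof.
rewrite (reindex_onto (upd x k) (fun y => y k)) /=; last first.
  move=> y /agreeP Ay; apply/ffunP => j; case: (eqVneq k j) => [<-|kj].
    by rewrite upd_same.
  by rewrite upd_other // Ay // inE eq_sym.
apply: eq_big => [a|a _]; last by rewrite upd_same.
rewrite upd_same eqxx andbT; apply/agreeP => j; rewrite inE eq_sym => kj.
by rewrite upd_other.
Qed.

Lemma key d (c : circuit C Omega d) : uniq (leaves c) -> positive_unital c ->
  forall x, \sum_(y | agree (leaves c) x y) eval c y = 1%:M.
Proof.
elim: c => [d0 k E | d0 dl dr Ks l IHl r IHr] /=.
  by move=> _ [_ HE] x; rewrite sum_leaf.
rewrite cat_uniq => /and3P[ul dis ur] [_ Hu pl pr] x.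
rewrite kraus_sum sum_tens ?IHl ?IHr ?tens11 //; try exact: eval_dep.
by move=> k kl; apply: contraNN dis => kr; apply/hasP; exists k.
Qed.

Lemma eval_psd d (c : circuit C Omega d) : positive_unital c -> forall x, psdmx (eval c x).
Proof.
elim: c => [d0 k E | d0 dl dr Ks l IHl r IHr] /=.
  by move=> [HE _] x; apply: HE.
move=> [_ _ pl pr] x; apply: psd_kraus; apply: psd_tens; [exact: IHl | exact: IHr].
Qed.


Lemma kraus_zero d dl (Ks : seq 'M[C]_(d, dl)) A : dl = 0%N -> kraus_apply Ks A = 0.
Proof.
move=> E; rewrite /kraus_apply big1 // => K _.
apply/matrixP => i j; rewrite !mxE big1 // => a _.
by have := ltn_ord a; rewrite {2}E.
Qed.

Lemma zero_dim d (c : circuit C Omega d) k : k \in leaves c -> (Omega k -> False) ->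
  positive_unital c -> d = 0%N.
Proof.
move=> + Hk; elim: c => [d0 k0 E | d0 dl dr Ks l IHl r IHr] /=.
  rewrite inE => /eqP kE; subst k0; move=> [_ HE].
  case: d0 E HE => // d0 E; rewrite big1 => [/matrixP/(_ ord0 ord0)|a]; last by case: (Hk a).
  by rewrite !mxE eqxx => /eqP; rewrite eq_sym oner_eq0.
rewrite mem_cat => kin [_ Hu pl pr].
have E : (dl * dr = 0)%N.
  by case/orP: kin => [/IHl -> //| /IHr ->]; rewrite ?muln0.
move: Hu; rewrite /is_unital kraus_zero //.
case: d0 Ks => // d0 Ks /matrixP/(_ ord0 ord0).
by rewrite !mxE eqxx => /eqP; rewrite eq_sym oner_eq0.
Qed.

End Circ.

Theorem proposition4 (C : numClosedFieldType) (N : nat) (Omega : 'I_N -> finType)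
  (d : nat) (O : circuit C Omega d) :
  partition_circuit O -> positive_unital O ->
  POVM (fun x : assignment Omega => eval O x).
Proof.
move=> Hp Hu; split; first exact: eval_psd.
have ul : uniq (leaves O) by rewrite (perm_uniq Hp) enum_uniq.
have allin : forall k, k \in leaves O by move=> k; rewrite (perm_mem Hp) mem_enum.
case: (pickP (fun _ : assignment Omega => true)) => [x0 _|H0].
  rewrite -(key ul Hu x0); apply: eq_bigl => y; symmetry.
  by apply/agreeP => k; rewrite allin.
case: (boolP [forall k, [exists a : Omega k, true]]) => [/forallP Hall|].
  pose x : assignment Omega := finfun (fun k => xchoose (existsP (Hall k))).
  by have := H0 x.
rewrite negb_forall => /existsP [k /existsPn Hk].
have d0 := zero_dim (allin k) (fun a => notF (Hk a)) Hu.
by subst d; apply/matrixP => -[].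
Qed.
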